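(* Let $N$ be a positive integer, $h:=1/N$, $t_j:=jh$, and $e_n(t):=\exp(2\pi i n t)$. Then for every integer $n$ with $|n|\le N-1$ and every $t\in\mathbb R$ with $t/h\notin\mathbb Z$, \[ h\sum_{j=1}^{N}\cot(\pi(t-t_j))\,e_n(t_j)=\mathrm{p.v.}\int_0^1\cot(\pi(t-\tau))\,e_n(\tau)\,\mathrm d\tau+\cot(\pi t/h)\,e_n(t). \]
   Context: p.v. denotes the Cauchy principal value integral. *)

(* Defs.v *)
From Stdlib Require Import Reals.
From Coquelicot Require Import Coquelicot.
Open Scope R_scope.

Definition cot (x : R) : R := cos x / sin x.

Definition e_ (n : Z) (t : R) : C :=
  (cos (2 * PI * IZR n * t), sin (2 * PI * IZR n * t)).

Definition is_pv_integral (f : R -> C) (a b c : R) (L : C) : Prop :=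
  filterlim (fun eps => plus (@RInt C_R_CompleteNormedModule f a (c - eps)) (@RInt C_R_CompleteNormedModule f (c + eps) b))
            (at_right 0) (locally L).

(* the singular point uses Stdlib's frac_part t = t - IZR (Int_part t) in [0,1) *)

(* Main.v *)
Require Import Defs.
From Stdlib Require Import Reals Lra Lia.
From Coquelicot Require Import Coquelicot.
Open Scope R_scope.

Lemma C_eq (a b : C) : fst a = fst b -> snd a = snd b -> a = b.
Proof. destruct a, b; simpl; intros; subst; auto. Qed.

Lemma e_mul (a b : Z) x : (e_ a x * e_ b x = e_ (a + b) x)%C.
Proof.
  unfold e_. apply C_eq; simpl; rewrite plus_IZR.
  - replace (2 * PI * (IZR a + IZR b) * x) with (2*PI*IZR a*x + 2*PI*IZR b*x) by ring.
    rewrite cos_plus; ring.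
  - replace (2 * PI * (IZR a + IZR b) * x) with (2*PI*IZR a*x + 2*PI*IZR b*x) by ring.
    rewrite sin_plus; ring.
Qed.

Lemma e_add (a : Z) x y : (e_ a (x + y) = e_ a x * e_ a y)%C.
Proof.
  unfold e_. apply C_eq; simpl.
  - replace (2 * PI * IZR a * (x+y)) with (2*PI*IZR a*x + 2*PI*IZR a*y) by ring.
    rewrite cos_plus; ring.
  - replace (2 * PI * IZR a * (x+y)) with (2*PI*IZR a*x + 2*PI*IZR a*y) by ring.
    rewrite sin_plus; ring.
Qed.

Lemma e_zero x : e_ 0 x = 1%C.
Proof. unfold e_. apply C_eq; simpl; replace (2*PI*0*x) with 0 by ring. apply cos_0. apply sin_0. Qed.

Lemma sin_intPI (k : Z) : sin (IZR k * PI) = 0.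
Proof. apply sin_eq_0_1; eauto. Qed.

Lemma cos_2intPI (k : Z) : cos (2 * PI * IZR k) = 1.
Proof. replace (2*PI*IZR k) with (2 * (IZR k * PI)) by ring. rewrite cos_2a_sin, sin_intPI. ring. Qed.

Lemma sin_2intPI (k : Z) : sin (2 * PI * IZR k) = 0.
Proof. replace (2*PI*IZR k) with (IZR (2*k) * PI) by (rewrite mult_IZR; simpl; ring). apply sin_intPI. Qed.

Lemma cos_eq1 x : cos x = 1 -> exists k : Z, x = 2 * PI * IZR k.
Proof.
  intros H. replace x with (2 * (x/2)) in H by field. rewrite cos_2a_sin in H.
  assert (sin (x/2) = 0) by nra. apply sin_eq_0_0 in H0. destruct H0 as [k Hk].
  exists k. lra.
Qed.

Lemma e_int (a k : Z) : e_ a (IZR k) = 1%C.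
Proof. unfold e_. rewrite Rmult_assoc, <- mult_IZR. apply C_eq; simpl.
  apply cos_2intPI. apply sin_2intPI. Qed.
Lemma T2 x y : cos(x-y)*(sin(2*y) - sin(2*x)) = -sin(x-y)*(cos(2*x)+cos(2*y)).
Proof. rewrite cos_minus, sin_minus, !cos_2a, !sin_2a.
 pose proof (sin2_cos2 x) as HA; pose proof (sin2_cos2 y) as HB; unfold Rsqr in *.
 set (sx := sin x) in *; set (cx := cos x) in *; set (sy := sin y) in *; set (cy := cos y) in *.
 assert (A: cx * cx + sx*sx - 1 = 0) by lra. assert (B: cy * cy + sy*sy - 1 = 0) by lra.
 match goal with |- ?L = ?R => assert (L - R = 2*cx*sy*(cy * cy + sy*sy - 1) - 2*sx*cy*(cx * cx + sx*sx - 1) + (sx*cy - cx*sy)*((cx * cx + sx*sx - 1) + (cy * cy + sy*sy - 1))) by ring end.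
 rewrite A, B in H. lra.
Qed.
Lemma T1 x y : cos(x-y)*(cos(2*y) - cos(2*x)) = sin(x-y)*(sin(2*x)+sin(2*y)).
Proof. rewrite cos_minus, sin_minus, !cos_2a, !sin_2a.
 pose proof (sin2_cos2 x) as HA; pose proof (sin2_cos2 y) as HB; unfold Rsqr in *.
 set (sx := sin x) in *; set (cx := cos x) in *; set (sy := sin y) in *; set (cy := cos y) in *.
 assert (cx * cx = 1 - sx*sx) as E1 by lra. assert (cy * cy = 1 - sy*sy) as E2 by lra.
 transitivity ((cx * cy + sx * sy) * (cy * cy - sy * sy - (cx * cx - sx * sx))). ring.
 rewrite E1, E2. 
 transitivity (sx * cy * (2 * sx * cx) + sx*cy*(2*sy*cy) - cx * sy * (2*sx*cx) - cx*sy*(2*sy*cy)). 2: ring.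
 replace (sx * cy * (2 * sx * cx)) with (2 * sx*sx*cx*cy) by ring.
 replace (sx * cy * (2 * sy * cy)) with (2*sx*sy*(cy*cy)) by ring.
 replace (cx * sy * (2 * sx * cx)) with (2*sx*sy*(cx*cx)) by ring.
 rewrite E1, E2. ring.
Qed.

Lemma base_id (s : Z) (t x : R) : (s = 1 \/ s = -1)%Z -> sin (PI * (t - x)) <> 0 ->
  (RtoC (cot (PI * (t - x))) * (e_ s x - e_ s t) = (- Ci * RtoC (IZR s)) * (e_ s t + e_ s x))%C.
Proof.
  intros Hs Hsin.
  assert (Ha: PI * (t - x) = PI * t - PI * x) by ring. rewrite Ha in *.
  pose proof (T1 (PI*t) (PI*x)) as H1. pose proof (T2 (PI*t) (PI*x)) as H2.
  unfold cot, e_. destruct Hs as [-> | ->]; apply C_eq; simpl;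
  replace (2 * PI * 1 * x) with (2 * (PI * x)) by ring;
  replace (2 * PI * 1 * t) with (2 * (PI * t)) by ring;
  try replace (2 * PI * -1 * x) with (- (2 * (PI * x))) by ring;
  try replace (2 * PI * -1 * t) with (- (2 * (PI * t))) by ring;
  rewrite ?cos_neg, ?sin_neg; field_simplify; auto; try lra;
  unfold Rdiv; apply Rmult_eq_reg_r with (sin (PI*t - PI*x)); auto; rewrite Rmult_assoc, Rinv_l, Rmult_1_r; auto; nra.
Qed.

Fixpoint Q (s:Z) (t:R) (p:nat) (x:R) : C :=
  match p with
  | O => 0%C
  | S p => (e_ s x * Q s t p x + e_ (s * Z.of_nat p) t * (e_ s t + e_ s x))%C
  end.

Lemma e_S (s : Z) (p : nat) x : e_ (s * Z.of_nat (S p)) x = (e_ s x * e_ (s * Z.of_nat p) x)%C.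
Proof. rewrite e_mul. f_equal. lia. Qed.

Lemma Q_id (s : Z) (t x : R) (p : nat) : (s = 1 \/ s = -1)%Z -> sin (PI * (t - x)) <> 0 ->
  (RtoC (cot (PI * (t - x))) * (e_ (s * Z.of_nat p) x - e_ (s * Z.of_nat p) t)
   = (- Ci * RtoC (IZR s)) * Q s t p x)%C.
Proof.
  intros Hs Hsin. induction p as [|p IH].
  - simpl. rewrite Z.mul_0_r, !e_zero. ring.
  - rewrite !e_S. simpl Q.
    set (c := RtoC (cot (PI * (t - x)))) in *.
    transitivity (e_ s x * (c * (e_ (s * Z.of_nat p) x - e_ (s * Z.of_nat p) t))
                  + e_ (s * Z.of_nat p) t * (c * (e_ s x - e_ s t)))%C.
    + ring.
    + rewrite IH. unfold c. rewrite base_id; auto. ring.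
Qed.

Lemma frame (P : (R -> C) -> C -> Prop) (Nn : nat) (alpha : C) (s : Z) (t : R) :
  (forall f g u v, P f u -> P g v -> P (fun x => f x + g x)%C (u + v)%C) ->
  (forall f u c, P f u -> P (fun x => c * f x)%C (c * u)%C) ->
  (forall f g u, P f u -> (forall x, f x = g x) -> P g u) ->
  (forall m : nat, (m <= Nn)%nat -> P (e_ (s * Z.of_nat m))
       ((if Nat.eqb m 0 then 1 else 0) + (if Nat.eqb m Nn then alpha else 0))%C) ->
  (0 < Nn)%nat ->
  forall p k, (1 <= p)%nat -> (k + p <= Nn)%nat ->
  P (fun x => e_ (s * Z.of_nat k) x * Q s t p x)%C
    ((if Nat.eqb k 0 then e_ (s * Z.of_nat p) t else 0) + (if Nat.eqb (k + p) Nn then alpha else 0))%C.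
Proof.
  intros Hp Hm He Hb HN.
  assert (He' : forall f g u v, P f u -> (forall x, f x = g x) -> u = v -> P g v).
  { intros f g u v H1 H2 ->. eapply He; eauto. }
  intros p. induction p as [|p IH]; intros k H1 H2; [lia|].
  destruct p as [|p1].
  - pose proof (Hp _ _ _ _ (Hm _ _ (e_ s t) (Hb k ltac:(lia))) (Hb (S k) ltac:(lia))) as H.
    eapply He'; [exact H| |].
    + intros x. cbn [Q]. rewrite e_S, Z.mul_0_r, e_zero. ring.
    + rewrite Z.mul_1_r.
      destruct (Nat.eqb_spec k 0); destruct (Nat.eqb_spec k Nn); destruct (Nat.eqb_spec (S k) 0);
      destruct (Nat.eqb_spec (S k) Nn); destruct (Nat.eqb_spec (k+1) Nn); try lia; ring.
  - set (p := S p1) in *.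
    pose proof (Hp _ _ _ _ (Hp _ _ _ _ (IH (S k) ltac:(lia) ltac:(lia))
                  (Hm _ _ (e_ (s * Z.of_nat p) t * e_ s t)%C (Hb k ltac:(lia))))
                  (Hm _ _ (e_ (s * Z.of_nat p) t) (Hb (S k) ltac:(lia)))) as H.
    eapply He'; [exact H| |].
    + intros x. change (Q s t (S p) x) with (e_ s x * Q s t p x + e_ (s * Z.of_nat p) t * (e_ s t + e_ s x))%C.
      cbv beta. rewrite (e_S s k). ring.
    + rewrite e_S.
      destruct (Nat.eqb_spec k 0); destruct (Nat.eqb_spec k Nn); destruct (Nat.eqb_spec (S k) 0);
      destruct (Nat.eqb_spec (S k) Nn); destruct (Nat.eqb_spec (S k + p) Nn);
      destruct (Nat.eqb_spec (k + S p) Nn); try lia; ring.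
Qed.

Lemma cont_fst (f : R -> C) x : continuous f x -> continuous (fun y => fst (f y)) x.
Proof. intros H. apply continuous_comp; auto. destruct (f x). apply continuous_fst. Qed.
Lemma cont_snd (f : R -> C) x : continuous f x -> continuous (fun y => snd (f y)) x.
Proof. intros H. apply continuous_comp; auto. destruct (f x). apply continuous_snd. Qed.

Lemma cont_C (f : R -> C) x : continuous (fun y => fst (f y)) x -> continuous (fun y => snd (f y)) x -> continuous f x.
Proof.
  intros H1 H2. apply filterlim_locally. intros eps.
  apply filterlim_locally with (eps := eps) in H1.
  apply filterlim_locally with (eps := eps) in H2.
  generalize (filter_and _ _ H1 H2). apply filter_imp. intros y [Ha Hb]. split; auto.
Qed.

Lemma cont_Cmult (f : R -> C) (c : C) x : continuous f x -> continuous (fun y => (c * f y)%C) x.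
Proof.
  intros H. pose proof (cont_fst _ _ H) as H1. pose proof (cont_snd _ _ H) as H2.
  apply continuity_pt_filterlim in H1. apply continuity_pt_filterlim in H2.
  apply cont_C; simpl; apply continuity_pt_filterlim.
  - apply continuity_pt_minus; apply continuity_pt_mult; auto; apply continuity_pt_const; intros a b; auto.
  - apply continuity_pt_plus; apply continuity_pt_mult; auto; apply continuity_pt_const; intros a b; auto.
Qed.

Lemma cont_Cplus (f g : R -> C) x : continuous f x -> continuous g x -> continuous (fun y => (f y + g y)%C) x.
Proof. intros H1 H2. apply (continuous_plus f g x H1 H2). Qed.

Lemma cont_e (k : Z) x : continuous (e_ k) x.
Proof. apply cont_C; unfold e_; simpl; apply (ex_derive_continuous (K:=R_AbsRing) (V:=R_NormedModule)); auto_derive; auto. Qed.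

Lemma is_RInt_C (f : R -> C) a b (u1 u2 : R) :
  is_RInt (fun y => fst (f y)) a b u1 -> is_RInt (fun y => snd (f y)) a b u2 -> is_RInt f a b (u1, u2).
Proof. intros. apply (is_RInt_fct_extend_pair f a b u1 u2); auto. Qed.

Lemma is_RInt_Cfst (f : R -> C) a b v : is_RInt f a b v -> is_RInt (fun y => fst (f y)) a b (fst v).
Proof. intros. apply (is_RInt_fct_extend_fst f a b v); auto. Qed.
Lemma is_RInt_Csnd (f : R -> C) a b v : is_RInt f a b v -> is_RInt (fun y => snd (f y)) a b (snd v).
Proof. intros. apply (is_RInt_fct_extend_snd f a b v); auto. Qed.

Lemma is_RInt_Cmult (f : R -> C) (c : C) a b v : is_RInt f a b v -> is_RInt (fun y => (c * f y)%C) a b (c * v)%C.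
Proof.
  intros H. pose proof (is_RInt_Cfst _ _ _ _ H) as H1. pose proof (is_RInt_Csnd _ _ _ _ H) as H2.
  apply is_RInt_C; simpl.
  - apply (is_RInt_minus (V := R_NormedModule)); apply (is_RInt_scal (V := R_NormedModule)); auto.
  - apply (is_RInt_plus (V := R_NormedModule)); apply (is_RInt_scal (V := R_NormedModule)); auto.
Qed.

Lemma is_RInt_Cplus (f g : R -> C) a b u v : is_RInt f a b u -> is_RInt g a b v -> is_RInt (fun y => (f y + g y)%C) a b (u + v)%C.
Proof. intros H1 H2. apply (is_RInt_plus f g a b u v H1 H2). Qed.

Lemma is_RInt_RtoC (f : R -> R) a b v : is_RInt f a b v -> is_RInt (fun y => RtoC (f y)) a b (RtoC v).
Proof.
  intros H. apply is_RInt_C; simpl; auto.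
  pose proof (@is_RInt_const R_NormedModule a b 0) as H0. unfold scal in H0; simpl in H0; unfold mult in H0; simpl in H0; rewrite Rmult_0_r in H0. exact H0.
Qed.

Lemma RInt_deriv (F f : R -> R) a b : (forall x, is_derive F x (f x)) -> (forall x, continuous f x) ->
  is_RInt f a b (F b - F a).
Proof. intros H1 H2. apply (is_RInt_derive (V := R_CompleteNormedModule) F f a b); auto. Qed.

Lemma RInt_deriv' (F f : R -> R) a b v : (forall x, is_derive F x (f x)) -> (forall x, continuous f x) ->
  F b - F a = v -> is_RInt f a b v.
Proof. intros H1 H2 <-. apply RInt_deriv; auto. Qed.

Lemma RInt_e (k : Z) : is_RInt (e_ k) 0 1 (if Z.eqb k 0 then RtoC 1 else RtoC 0).
Proof.
  destruct (Z.eqb_spec k 0) as [->|Hk]; apply is_RInt_C; unfold e_; simpl.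
  - eapply is_RInt_ext; [| apply RInt_deriv' with (F := fun x => x) (f := fun _ => 1)].
    + intros y _. simpl. replace (2*PI*0*y) with 0 by ring. rewrite cos_0. auto.
    + intros x. auto_derive; auto.
    + intros x. apply continuous_const.
    + ring.
  - eapply is_RInt_ext; [| apply RInt_deriv' with (F := fun x => 0) (f := fun _ => 0)].
    + intros y _. simpl. replace (2*PI*0*y) with 0 by ring. rewrite sin_0. auto.
    + intros x. auto_derive; auto.
    + intros x. apply continuous_const.
    + ring.
  - assert (Hk' : 2 * PI * IZR k <> 0). { apply Rmult_integral_contrapositive_currified.
      pose proof PI_RGT_0; lra. apply not_0_IZR; auto. }
    assert (HkR: IZR k <> 0) by (apply not_0_IZR; auto). assert (HPI: PI <> 0) by (pose proof PI_RGT_0; lra).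
    apply RInt_deriv' with (F := fun x => sin (2*PI*IZR k*x) / (2*PI*IZR k)).
    + intros x. auto_derive; auto. field; auto.
    + intros x. apply (ex_derive_continuous (K:=R_AbsRing) (V:=R_NormedModule)); auto_derive; auto.
    + simpl. rewrite Rmult_1_r, Rmult_0_r, sin_2intPI, sin_0. field; auto.
  - assert (Hk' : 2 * PI * IZR k <> 0). { apply Rmult_integral_contrapositive_currified.
      pose proof PI_RGT_0; lra. apply not_0_IZR; auto. }
    assert (HkR: IZR k <> 0) by (apply not_0_IZR; auto). assert (HPI: PI <> 0) by (pose proof PI_RGT_0; lra).
    apply RInt_deriv' with (F := fun x => - cos (2*PI*IZR k*x) / (2*PI*IZR k)).
    + intros x. auto_derive; auto. field; auto.
    + intros x. apply (ex_derive_continuous (K:=R_AbsRing) (V:=R_NormedModule)); auto_derive; auto.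
    + simpl. rewrite Rmult_1_r, Rmult_0_r, cos_2intPI, cos_0. field; auto.
Qed.

Lemma sum_plusC (f g : nat -> C) a b : sum_n_m (fun j => (f j + g j)%C) a b = (sum_n_m f a b + sum_n_m g a b)%C.
Proof. exact (sum_n_m_plus (G := C_AbelianMonoid) f g a b). Qed.
Lemma sum_multC (c : C) (f : nat -> C) a b : sum_n_m (fun j => (c * f j)%C) a b = (c * sum_n_m f a b)%C.
Proof. apply (sum_n_m_mult_l (K := C_Ring)). Qed.
Lemma sum_one (N : nat) : sum_n_m (fun _ => RtoC 1) 1 N = RtoC (INR N).
Proof. induction N. - rewrite sum_n_m_zero; auto. simpl. auto.
  - rewrite sum_n_Sm by lia. rewrite IHN. match goal with |- _ = ?r => change r with (RtoC (INR (S N))) end. rewrite S_INR. change plus with Cplus.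
    apply injective_projections; simpl; ring. Qed.
Lemma geom (g : nat -> C) (w : C) (N : nat) : (1 <= N)%nat -> (forall j, g (S j) = w * g j)%C ->
  g (S N) = g 1%nat -> w <> RtoC 1 -> sum_n_m g 1 N = RtoC 0.
Proof.
  intros HN Hg HS Hw.
  assert (E: (w * sum_n_m g 1 N = sum_n_m g 1 N)%C).
  { rewrite <- sum_multC. rewrite (sum_n_m_ext _ (fun j => g (S j))) by (intros; auto).
    rewrite sum_n_m_S.
    pose proof (sum_n_Sm g 1 N ltac:(lia)) as E1. pose proof (sum_Sn_m g 1 (S N) ltac:(lia)) as E2.
    rewrite E1 in E2. change plus with Cplus in *. rewrite HS in E2.
    pose proof (f_equal fst E2) as F1. pose proof (f_equal snd E2) as F2. simpl in F1, F2.
    apply injective_projections; lra. }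
  assert (Hw' : (w - 1)%C <> RtoC 0). { intros H. apply Hw. replace w with ((w - 1) + 1)%C by ring. rewrite H. ring. }
  assert (K: forall S : C, (w * S = S)%C -> S = RtoC 0).
  { intros S HS0. replace S with (/ (w - 1) * ((w - 1) * S))%C.
    replace ((w - 1) * S)%C with (w * S - S)%C by ring. rewrite HS0. ring. field. auto. }
  apply K. exact E.
Qed.

Lemma INR_pos (N : nat) : (0 < N)%nat -> 0 < INR N.
Proof. intros. apply lt_0_INR. lia. Qed.

Lemma disc_e (N : nat) (HN : (0 < N)%nat) (s : Z) (Hs : (s = 1 \/ s = -1)%Z) (m : nat) (Hm : (m <= N)%nat) :
  (RtoC (/ INR N) * sum_n_m (fun j => e_ (s * Z.of_nat m) (INR j * / INR N)) 1 N
   = (if Nat.eqb m 0 then 1 else 0) + (if Nat.eqb m N then 1 else 0))%C.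
Proof.
  pose proof (INR_pos N HN) as HNp.
  destruct (Nat.eqb_spec m 0) as [->|Hm0].
  - destruct (Nat.eqb_spec 0 N); [lia|].
    rewrite (sum_n_m_ext _ (fun _ => RtoC 1)).
    + rewrite sum_one. apply injective_projections; simpl; field; lra.
    + intros j. rewrite Z.mul_0_r, e_zero. auto.
  - destruct (Nat.eqb_spec m N) as [->|HmN].
    + rewrite (sum_n_m_ext _ (fun _ => RtoC 1)).
      * rewrite sum_one. apply injective_projections; simpl; field; lra.
      * intros j. unfold e_.
        replace (2 * PI * IZR (s * Z.of_nat N) * (INR j * / INR N)) with (2 * PI * IZR (s * Z.of_nat j)).
        rewrite cos_2intPI, sin_2intPI. auto.
        rewrite !mult_IZR, <- !INR_IZR_INZ. field. lra.
    + rewrite (geom _ (e_ (s * Z.of_nat m) (/ INR N))).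
      * apply injective_projections; simpl; ring.
      * lia.
      * intros j. rewrite S_INR, Rmult_plus_distr_r, Rmult_1_l, e_add. ring.
      * rewrite S_INR, Rmult_plus_distr_r, Rmult_1_l, Rinv_r by lra.
        rewrite e_add. change 1 with (IZR 1). rewrite e_int. rewrite Rmult_1_l. ring.
      * intros Hw. apply (f_equal fst) in Hw. simpl in Hw. apply cos_eq1 in Hw.
        destruct Hw as [k Hk].
        assert (IZR (s * Z.of_nat m) = IZR (k * Z.of_nat N)).
        { rewrite !mult_IZR. rewrite <- (INR_IZR_INZ N).
          assert (HPI: PI > 0) by apply PI_RGT_0.
          apply Rmult_eq_reg_l with (2 * PI * / INR N). 2: { apply Rmult_integral_contrapositive_currified; [lra|].
            apply Rinv_neq_0_compat; lra. }
          replace (2 * PI * / INR N * (IZR k * INR N)) with (2 * PI * IZR k) by (field; lra).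
          rewrite <- Hk, mult_IZR. ring. }
        apply eq_IZR in H. assert (0 < Z.of_nat m < Z.of_nat N)%Z by lia. destruct (Z.lt_trichotomy k 0) as [Hk0|[Hk0|Hk0]]; [assert (k * Z.of_nat N <= - Z.of_nat N)%Z by nia | subst k | assert (k * Z.of_nat N >= Z.of_nat N)%Z by nia]; destruct Hs; subst; lia.
Qed.


Lemma frame0 (P : (R -> C) -> C -> Prop) (Nn : nat) (alpha : C) (s : Z) (t : R) :
  (forall f g u v, P f u -> P g v -> P (fun x => f x + g x)%C (u + v)%C) ->
  (forall f u c, P f u -> P (fun x => c * f x)%C (c * u)%C) ->
  (forall f g u, P f u -> (forall x, f x = g x) -> P g u) ->
  (forall m : nat, (m <= Nn)%nat -> P (e_ (s * Z.of_nat m))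
       ((if Nat.eqb m 0 then 1 else 0) + (if Nat.eqb m Nn then alpha else 0))%C) ->
  (0 < Nn)%nat ->
  forall p, (1 <= p)%nat -> (p <= Nn)%nat ->
  P (Q s t p) (e_ (s * Z.of_nat p) t + (if Nat.eqb p Nn then alpha else 0))%C.
Proof.
  intros Hp Hm He Hb HN p H1 H2.
  pose proof (frame P Nn alpha s t Hp Hm He Hb HN p 0 H1 ltac:(lia)) as H.
  simpl in H. eapply He; [exact H|]. intros x. rewrite Z.mul_0_r, e_zero. ring.
Qed.

Lemma Q_cont s t p x : continuous (Q s t p) x.
Proof.
  destruct p as [|p].
  - apply continuous_const.
  - pose proof (frame0 (fun f _ => forall x, continuous f x) (S p) (RtoC 0) s t) as H.
    simpl in H. apply H; try lia.
    + intros f g _ _ H1 H2 y. apply cont_Cplus; auto.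
    + intros f _ c H1 y. apply cont_Cmult; auto.
    + intros f g _ H1 H2 y. apply (continuous_ext f); auto.
    + intros m _ y. apply cont_e.
Qed.

Lemma Q_int s t p : (s <> 0)%Z -> (1 <= p)%nat -> is_RInt (Q s t p) 0 1 (e_ (s * Z.of_nat p) t).
Proof.
  intros Hs Hp.
  pose proof (frame0 (fun f v => is_RInt f 0 1 v) p (RtoC 0) s t) as H.
  assert (E: (e_ (s * Z.of_nat p) t + (if Nat.eqb p p then RtoC 0 else 0))%C = e_ (s * Z.of_nat p) t).
  { rewrite Nat.eqb_refl. ring. }
  rewrite <- E. apply H; auto.
  - intros. apply is_RInt_Cplus; auto.
  - intros. apply is_RInt_Cmult; auto.
  - intros f g u H1 H2. eapply is_RInt_ext; [|exact H1]. intros; auto.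
  - intros m Hm. pose proof (RInt_e (s * Z.of_nat m)) as H0.
    destruct (Nat.eqb_spec m 0) as [->|Hm0].
    + simpl in H0. rewrite Z.mul_0_r in H0. simpl in H0. destruct (Nat.eqb_spec 0 p); [lia|].
      replace (1 + 0)%C with (RtoC 1) by ring. rewrite Z.mul_0_r. exact H0.
    + destruct (Z.eqb_spec (s * Z.of_nat m) 0); [lia|].
      replace (0 + (if m =? p then RtoC 0 else 0))%C with (RtoC 0) by (destruct (m =? p); ring). exact H0.
Qed.

Definition PA (N : nat) (f : R -> C) (v : C) : Prop :=
  (RtoC (/ INR N) * sum_n_m (fun j => f (INR j * / INR N)%R) 1 N = v)%C.

Lemma Q_disc N s t p : (0 < N)%nat -> (s = 1 \/ s = -1)%Z -> (1 <= p)%nat -> (p <= N)%nat ->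
  PA N (Q s t p) (e_ (s * Z.of_nat p) t + (if Nat.eqb p N then 1 else 0))%C.
Proof.
  intros HN Hs H1 H2. apply frame0; auto.
  - unfold PA. intros f g u v <- <-. rewrite sum_plusC. ring.
  - unfold PA. intros f u c <-. rewrite sum_multC. ring.
  - unfold PA. intros f g u <- H. f_equal. apply sum_n_m_ext. intros; auto.
  - intros m Hm. unfold PA. apply disc_e; auto.
Qed.

Lemma sin_PI_int y : sin (PI * y) = 0 -> exists k, y = IZR k.
Proof. intros H. apply sin_eq_0_0 in H. destruct H as [k Hk]. exists k.
  pose proof PI_RGT_0. apply Rmult_eq_reg_l with PI; lra. Qed.

Lemma sin2_shift x m : sin (x + IZR m * PI) ^ 2 = sin x ^ 2.
Proof.
  rewrite sin_plus, sin_intPI.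
  assert (H: cos (IZR m * PI) ^ 2 = 1).
  { pose proof (sin2_cos2 (IZR m * PI)) as H. rewrite sin_intPI in H. unfold Rsqr in H. nra. }
  replace ((sin x * cos (IZR m * PI) + cos x * 0) ^ 2) with (sin x ^ 2 * cos (IZR m * PI) ^ 2) by ring.
  rewrite H. ring.
Qed.

Definition Fcot (t x : R) : R := - ln (sin (PI * (t - x)) ^ 2) / (2 * PI).

Lemma Fcot_deriv t x : sin (PI * (t - x)) <> 0 -> is_derive (Fcot t) x (cot (PI * (t - x))).
Proof.
  intros H. unfold Fcot, cot. pose proof PI_RGT_0.
  auto_derive.
  - apply pow2_gt_0 in H. auto.
    - replace (t + - x) with (t - x) by ring. field. split; lra.
Qed.

Lemma cot_cont t x : sin (PI * (t - x)) <> 0 -> continuous (fun y => cot (PI * (t - y))) x.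
Proof.
  intros H. unfold cot. apply (ex_derive_continuous (K:=R_AbsRing) (V:=R_NormedModule)). auto_derive. auto.
Qed.

Lemma cot_int t a b : a <= b -> (forall x, a <= x <= b -> sin (PI * (t - x)) <> 0) ->
  is_RInt (fun x => cot (PI * (t - x))) a b (Fcot t b - Fcot t a).
Proof.
  intros Hab H. apply (is_RInt_derive (V := R_CompleteNormedModule) (Fcot t)).
  - intros x Hx. rewrite Rmin_left, Rmax_right in Hx by lra. apply Fcot_deriv. auto.
  - intros x Hx. rewrite Rmin_left, Rmax_right in Hx by lra. apply cot_cont. auto.
Qed.

Lemma e_grid s N j : (0 < N)%nat -> e_ (s * Z.of_nat N) (INR j * / INR N) = RtoC 1.
Proof.
  intros HN. pose proof (INR_pos N HN). unfold e_.
  replace (2 * PI * IZR (s * Z.of_nat N) * (INR j * / INR N)) with (2 * PI * IZR (s * Z.of_nat j)).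
  rewrite cos_2intPI, sin_2intPI. auto.
  rewrite !mult_IZR, <- !INR_IZR_INZ. field. lra.
Qed.

Lemma cotW th : sin th <> 0 ->
  (RtoC (cot th) * (RtoC 1 - (cos (2*th), sin (2*th))) = (- Ci * RtoC (IZR 1)) * ((cos (2*th), sin (2*th)) + RtoC 1))%C.
Proof.
  intros H. assert (Hp: cos th * cos th = 1 - sin th * sin th) by (pose proof (sin2_cos2 th); unfold Rsqr in *; lra).
  unfold cot. apply injective_projections; simpl; rewrite sin_2a, ?cos_2a_sin.
  - field; auto.
  - transitivity (-2 * (cos th * cos th)). field; auto. rewrite Hp. ring.

Qed.

Lemma Acot_lemma (N : nat) (HN : (0 < N)%nat) (t : R) (HtN : forall k : Z, t * INR N <> IZR k) :
  (RtoC (/ INR N) * sum_n_m (fun j => RtoC (cot (PI * (t - INR j * / INR N)))) 1 N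
   = RtoC (cot (PI * t * INR N)))%C.
Proof.
  pose proof (INR_pos N HN) as HNp.
  assert (Hgrid: forall j:nat, sin (PI * (t - INR j * / INR N)) <> 0).
  { intros j E. apply sin_PI_int in E. destruct E as [k Hk]. apply (HtN (k * Z.of_nat N + Z.of_nat j)%Z).
    rewrite plus_IZR, mult_IZR, <- !INR_IZR_INZ. rewrite <- Hk. field. lra. }
  pose proof (Q_disc N 1 t N HN ltac:(auto) ltac:(lia) ltac:(lia)) as HQ. unfold PA in HQ.
  rewrite Nat.eqb_refl in HQ.
  set (W := e_ (1 * Z.of_nat N) t) in *.
  set (th := PI * t * INR N).
  assert (HW: W = (cos (2*th), sin (2*th))).
  { unfold W, e_, th. rewrite Z.mul_1_l, <- INR_IZR_INZ.
    replace (2 * PI * INR N * t) with (2 * (PI * t * INR N)) by ring. auto. }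
  assert (Hsth: sin th <> 0).
  { intros E. unfold th in E. replace (PI * t * INR N) with (PI * (t * INR N)) in E by ring.
    apply sin_PI_int in E. destruct E as [k Hk]. apply (HtN k). auto. }
  assert (HW1: (RtoC 1 - W)%C <> RtoC 0).
  { intros E. rewrite HW in E. pose proof (f_equal fst E) as E1. simpl in E1.
    assert (E2: cos (2 * th) = 1) by lra. apply cos_eq1 in E2. destruct E2 as [k Hk].
    apply Hsth. replace th with (IZR k * PI) by lra. apply sin_intPI. }
  assert (Hsum: ((RtoC (/ INR N) * sum_n_m (fun j => RtoC (cot (PI * (t - INR j * / INR N)))) 1 N) * (RtoC 1 - W)
                 = (- Ci * RtoC (IZR 1)) * (W + RtoC 1))%C).
  { rewrite <- HQ.
    transitivity (RtoC (/ INR N) * sum_n_m (fun j => (RtoC 1 - W) * RtoC (cot (PI * (t - INR j * / INR N))))%C 1 N)%C.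
    { rewrite sum_multC. ring. }
    rewrite (sum_n_m_ext _ (fun j => (- Ci * RtoC (IZR 1)) * Q 1 t N (INR j * / INR N)))%C.
    { rewrite sum_multC. ring. }
    intros j. rewrite <- Q_id by auto. rewrite e_grid by auto. fold W. apply Cmult_comm. }
  rewrite HW in Hsum. rewrite <- cotW in Hsum by auto. rewrite <- HW in Hsum.
  set (X := (RtoC (/ INR N) * sum_n_m (fun j => RtoC (cot (PI * (t - INR j * / INR N)))) 1 N)%C) in *.
  assert (K: forall A B : C, (A * (RtoC 1 - W) = B * (RtoC 1 - W))%C -> A = B).
  { intros A B E. replace A with (A * (RtoC 1 - W) / (RtoC 1 - W))%C by (field; auto).
    rewrite E. field; auto. }
  apply K. exact Hsum.
Qed.

Lemma int_small (z : Z) : -1 < IZR z < 1 -> z = 0%Z.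
Proof. intros [H1 H2]. apply lt_IZR in H2. replace (-1) with (IZR (-1)) in H1 by reflexivity.
  apply lt_IZR in H1. lia. Qed.

Theorem lemmaB2 (N : nat) (HN : (0 < N)%nat) (n : Z) (t : R) :
  let h := / INR N in
  (Z.abs n <= Z.of_nat N - 1)%Z ->
  (forall k : Z, t / h <> IZR k) ->
  exists pv : C,
    is_pv_integral (fun tau => RtoC (cot (PI * (t - tau))) * e_ n tau)%C
                   0 1 (frac_part t) pv /\
    (RtoC h * sum_n_m (fun j => RtoC (cot (PI * (t - INR j * h))) * e_ n (INR j * h)) 1 N)%C
    = (pv + RtoC (cot (PI * t / h)) * e_ n t)%C.
Proof.
  intros h Hn Ht.
  pose proof (INR_pos N HN) as HNp.
  assert (HtN: forall k : Z, t * INR N <> IZR k).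
  { intros k E. apply (Ht k). unfold h. rewrite <- E. field. lra. }
  set (s := if Z.leb 0 n then 1%Z else (-1)%Z).
  set (p := Z.abs_nat n).
  assert (Hs: (s = 1 \/ s = -1)%Z) by (unfold s; destruct (Z.leb 0 n); auto).
  assert (Hneq: n = (s * Z.of_nat p)%Z) by (unfold s, p; destruct (Z.leb_spec 0 n); lia).
  assert (Hp: (p <= N - 1)%nat) by (unfold p; lia).
  set (K := (- Ci * RtoC (IZR s))%C).
  set (V := if Nat.eqb p 0 then RtoC 0 else e_ n t).
  assert (Hdec: forall x, sin (PI * (t - x)) <> 0 ->
     (RtoC (cot (PI * (t - x))) * e_ n x = e_ n t * RtoC (cot (PI * (t - x))) + K * Q s t p x)%C).
  { intros x Hx. unfold K. rewrite <- Q_id by auto. rewrite <- Hneq. ring. }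
  assert (HI: is_RInt (Q s t p) 0 1 V).
  { unfold V. destruct (Nat.eqb_spec p 0) as [E|E].
    - rewrite E. simpl. eapply is_RInt_ext; [|apply is_RInt_RtoC; apply RInt_deriv' with (F := fun _ => 0) (f := fun _ => 0)].
      + intros; reflexivity.
      + intros; auto_derive; auto.
      + intros; apply continuous_const.
      + ring.
    - rewrite Hneq. apply Q_int. destruct Hs; lia. lia. }
  assert (HA: PA N (Q s t p) V).
  { unfold V, PA. destruct (Nat.eqb_spec p 0) as [E|E].
    - rewrite E. simpl. rewrite (sum_n_m_ext _ (fun j => (RtoC 0 * RtoC 0)%C)).
      + rewrite sum_multC. ring.
      + intros. simpl. symmetry. apply Cmult_0_l.
    - pose proof (Q_disc N s t p HN Hs ltac:(lia) ltac:(lia)) as H. unfold PA in H. rewrite H.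
      destruct (Nat.eqb_spec p N); [lia|]. rewrite Hneq. ring. }
  assert (Hgrid: forall j:nat, sin (PI * (t - INR j * h)) <> 0).
  { intros j E. apply sin_PI_int in E. destruct E as [k Hk]. apply (HtN (k * Z.of_nat N + Z.of_nat j)%Z).
    rewrite plus_IZR, mult_IZR, <- !INR_IZR_INZ. rewrite <- Hk. unfold h. field. lra. }
  assert (Hcot: (RtoC h * sum_n_m (fun j => RtoC (cot (PI * (t - INR j * h)))) 1 N)%C = RtoC (cot (PI * t / h))).
  { unfold h. replace (PI * t / / INR N) with (PI * t * INR N) by (field; lra). apply Acot_lemma; auto. }
  assert (HD: (RtoC h * sum_n_m (fun j => RtoC (cot (PI * (t - INR j * h))) * e_ n (INR j * h)) 1 N)%C
              = (e_ n t * RtoC (cot (PI * t / h)) + K * V)%C).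
  { rewrite (sum_n_m_ext _ (fun j => e_ n t * RtoC (cot (PI * (t - INR j * h))) + K * Q s t p (INR j * h)))%C
      by (intros; apply Hdec; apply Hgrid).
    rewrite sum_plusC, !sum_multC. rewrite <- Hcot. unfold PA in HA. rewrite <- HA. unfold h. ring. }
  exists (K * V)%C. split.
  2: { rewrite HD. ring. }
  set (c := frac_part t).
  set (m := Int_part t).
  assert (Hcm: t - c = IZR m) by (unfold c, frac_part, m; ring).
  assert (Hc01: 0 < c < 1).
  { pose proof (base_Int_part t) as [B1 B2]. fold m in B1, B2. split.
    - destruct (Rle_lt_or_eq_dec 0 c) as [H|H]; [lra|auto|].
      exfalso. apply (HtN (m * Z.of_nat N)%Z). rewrite mult_IZR, <- INR_IZR_INZ. rewrite <- Hcm, <- H. ring.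
    - lra. }
  assert (Hnz: forall x, 0 <= x <= 1 -> x <> c -> sin (PI * (t - x)) <> 0).
  { intros x Hx Hxc E0. apply sin_PI_int in E0. destruct E0 as [k Hk]. apply Hxc.
    assert (H0: x - c = IZR (m - k)) by (rewrite minus_IZR; lra).
    assert (H1: (m - k = 0)%Z) by (apply int_small; lra). rewrite H1 in H0. simpl in H0. lra. }
  set (Qf := fun x => (K * Q s t p x)%C).
  assert (HQc: forall x, continuous Qf x) by (intros; apply cont_Cmult; apply Q_cont).
  set (G := fun x => @RInt C_R_CompleteNormedModule Qf 0 x).
  assert (HG: forall x, is_RInt Qf 0 x (G x)).
  { intros x. apply (RInt_correct (V := C_R_CompleteNormedModule)). apply (ex_RInt_continuous (V := C_R_CompleteNormedModule)). intros; auto. }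
  assert (HGc: forall x, continuous G x).
  { intros x. apply (ex_derive_continuous (K:=R_AbsRing) (V:=C_R_NormedModule)). exists (Qf x).
    apply is_derive_RInt with 0. apply filter_forall. intros; apply HG. apply HQc. }
  assert (HG1: G 1 = (K * V)%C) by (apply is_RInt_unique; apply is_RInt_Cmult; exact HI).
  set (f := fun tau => (RtoC (cot (PI * (t - tau))) * e_ n tau)%C).
  set (E := fun eps : R => (G (c - eps)%R + (G 1 + RtoC (-1) * G (c + eps)%R))%C).
  assert (Hev: forall eps, 0 < eps < Rmin c (1 - c) ->
            plus (@RInt C_R_CompleteNormedModule f 0 (c - eps)) (@RInt C_R_CompleteNormedModule f (c + eps) 1) = E eps).
  { intros eps [He1 He2].
    assert (He3: eps < c) by (eapply Rlt_le_trans; [exact He2| apply Rmin_l]).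
    assert (He4: eps < 1 - c) by (eapply Rlt_le_trans; [exact He2| apply Rmin_r]).
    assert (R1: @RInt C_R_CompleteNormedModule f 0 (c - eps) = (e_ n t * RtoC (Fcot t (c - eps) - Fcot t 0) + G (c - eps)%R)%C).
    { apply is_RInt_unique.
      eapply is_RInt_ext; [| apply is_RInt_Cplus; [apply is_RInt_Cmult; apply is_RInt_RtoC; apply cot_int | apply HG]].
      - intros x Hx. rewrite Rmin_left, Rmax_right in Hx by lra. unfold f, Qf. symmetry. apply Hdec. apply Hnz; lra.
      - lra.
      - intros x Hx. apply Hnz; lra. }
    assert (HR: is_RInt Qf (c + eps) 1 (@RInt C_R_CompleteNormedModule Qf (c + eps) 1)).
    { apply (RInt_correct (V := C_R_CompleteNormedModule)). apply (ex_RInt_continuous (V := C_R_CompleteNormedModule)). intros; auto. }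
    assert (R2: @RInt C_R_CompleteNormedModule f (c + eps) 1 = (e_ n t * RtoC (Fcot t 1 - Fcot t (c + eps)) + @RInt C_R_CompleteNormedModule Qf (c + eps) 1)%C).
    { apply is_RInt_unique.
      eapply is_RInt_ext; [| apply is_RInt_Cplus; [apply is_RInt_Cmult; apply is_RInt_RtoC; apply cot_int | apply HR]].
      - intros x Hx. rewrite Rmin_left, Rmax_right in Hx by lra. unfold f, Qf. symmetry. apply Hdec. apply Hnz; lra.
      - lra.
      - intros x Hx. apply Hnz; lra. }
    assert (Hch: plus (G (c + eps)) (@RInt C_R_CompleteNormedModule Qf (c + eps) 1) = G 1).
    { unfold G. apply (RInt_Chasles (V := C_R_CompleteNormedModule)).
      - apply (ex_RInt_continuous (V := C_R_CompleteNormedModule)). intros; auto.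
      - apply (ex_RInt_continuous (V := C_R_CompleteNormedModule)). intros; auto. }
    assert (Fs: Fcot t (c - eps) - Fcot t 0 + (Fcot t 1 - Fcot t (c + eps)) = 0).
    { unfold Fcot.
      replace (PI * (t - (c - eps))) with (PI * eps + IZR m * PI) by (rewrite <- Hcm; ring).
      replace (PI * (t - (c + eps))) with (- (PI * eps) + IZR m * PI) by (rewrite <- Hcm; ring).
      replace (PI * (t - 1)) with (PI * t + IZR (-1) * PI) by (simpl; ring).
      rewrite !sin2_shift. rewrite sin_neg. replace (PI * (t - 0)) with (PI * t) by ring.
      replace ((- sin (PI * eps)) ^ 2) with (sin (PI * eps) ^ 2) by ring. field.
      pose proof PI_RGT_0; lra. }
    rewrite R1, R2. unfold E. rewrite <- Hch.
    set (g1 := G (c - eps)%R). set (g2 := G (c + eps)%R). set (r := @RInt C_R_CompleteNormedModule Qf (c + eps) 1).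
    change (Cplus (e_ n t * RtoC (Fcot t (c - eps) - Fcot t 0) + g1) (e_ n t * RtoC (Fcot t 1 - Fcot t (c + eps)) + r)
           = g1 + (Cplus g2 r + RtoC (-1) * g2))%C.
    replace (Fcot t 1 - Fcot t (c + eps)) with (- (Fcot t (c - eps) - Fcot t 0)) by lra.
    apply injective_projections; simpl; ring. }
  assert (HE: continuous E 0).
  { unfold E. apply cont_Cplus.
    - apply continuous_comp with (g := G) (f := fun e => c - e).
      + apply continuity_pt_filterlim. apply continuity_pt_minus; [apply continuity_pt_const; intros a b; auto | apply continuity_pt_id].
      + apply HGc.
    - apply cont_Cplus. apply continuous_const. apply cont_Cmult.
      apply continuous_comp with (g := G) (f := fun e => c + e).
      + apply continuity_pt_filterlim. apply continuity_pt_plus; [apply continuity_pt_const; intros a b; auto | apply continuity_pt_id].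
      + apply HGc. }
  assert (HE0: E 0 = (K * V)%C).
  { rewrite <- HG1. unfold E. rewrite Rminus_0_r, Rplus_0_r. apply injective_projections; simpl; ring. }
  unfold is_pv_integral. fold c. fold f.
  apply filterlim_ext_loc with E.
  - assert (Hd: 0 < Rmin c (1 - c)) by (apply Rmin_pos; lra).
    exists (mkposreal _ Hd). intros y Hy Hy0. simpl in Hy. symmetry. apply Hev. split; auto.
    unfold ball in Hy; simpl in Hy. unfold AbsRing_ball, abs, minus, plus, opp in Hy; simpl in Hy.
    rewrite Ropp_0, Rplus_0_r, Rabs_pos_eq in Hy by lra. auto.
  - rewrite <- HE0. apply (filterlim_filter_le_1 _ (filter_le_within _)). apply HE.
Qed.
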